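(* Let $K\subseteq\mathbb{R}^m$ be closed, let $G:\mathbb{R}^n\to\mathbb{R}^m$ be second-order gph-regular at $x^*$, let $\Psi=\{x\in\mathbb{R}^n:G(x)\in K\}$ with $x^*\in\Psi$, and suppose that MSCQ for $\Psi$ holds at $x^*$. If $K$ is outer second-order regular at $G(x^* )$ in direction $G'(x^*;d)$, then $\Psi$ is outer second-order regular at $x^*$ in direction $d$. Furthermore, if $K$ is outer second-order regular at $G(x^* )$ (in every direction), then $\Psi$ is outer second-order regular at $x^*$ (in every direction).
   Context: Definitions. For $g:\mathbb{R}^n\to\mathbb{R}^k$: $g'(x;d)=\lim_{t\downarrow0}(g(x+td)-g(x))/t$; $g$ is second-order directionally differentiable at $x$ if for every $d$, $g'(x;d)$ exists and $g''(x;d,w):=\lim_{t\downarrow0}\frac{g(x+td+\frac12t^2w)-g(x)-tg'(x;d)}{\frac12t^2}$ exists for all $w$. $g$ is second-order gph-regular at $x^*$ if it is locally Lipschitz continuous and second-order directionally differentiable at $x^*$ and for every $d$ and every path $w:\mathbb{R}_+\to\mathbb{R}^n$ with $tw(t)\to0$ as $t\downarrow0$ there is $r$ with $\|r(t)\|/t^2\to0$ such that $g(x^*+td+\frac12t^2w(t))=g(x^* )+tg'(x^*;d)+\frac12t^2g''(x^*;d,w(t))+r(t)$ for $t\ge0$. For a set $C$ and $x^*\in C$: tangent cone $\mathcal{T}_C(x^* )=\{d:\exists t_k\downarrow0,d^k\to d,x^*+t_kd^k\in C\}$; for $d\in\mathcal{T}_C(x^* )$, $\mathcal{T}^2_C(x^*;d)=\{w:\exists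 t_k\downarrow0,w^k\to w,x^*+t_kd+\frac12t_k^2w^k\in C\}$ (outer second-order tangent set). $C$ is outer second-order regular at $x^*$ in direction $d$ if for every sequence $x^k=x^*+t_kd+\frac12t_k^2w^k\in C$ with $t_k\downarrow0$ and $t_kw^k\to0$, $\lim_k\mathrm{dist}(w^k,\mathcal{T}^2_C(x^*;d))=0$. MSCQ for $\Psi$ holds at $x^*$ if there are a neighborhood $U$ of $x^*$ and $\kappa>0$ with $\mathrm{dist}(x,\Psi)\le\kappa\,\mathrm{dist}(G(x),K)$ for all $x\in U$. *)

(* Defs.v *)
(* R : realType, R^n rendered as 'rV[R]_n with its
   canonical (sup) norm; all notions below are norm-independent. *)
From HB Require Import structures.
From mathcomp Require Import all_boot all_order all_algebra.
From mathcomp Require Import all_classical all_reals all_analysis.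
Set Implicit Arguments. Unset Strict Implicit. Unset Printing Implicit Defensive.
Import Order.TTheory GRing.Theory Num.Theory.
Import numFieldNormedType.Exports.
Local Open Scope classical_set_scope.
Local Open Scope ring_scope.

Section Defs.
Variable R : realType.

(* dist(x, C) = inf_{y in C} |x - y|, in \bar R (so dist(x, empty) = +oo) *)
Definition dist (n : nat) (x : 'rV[R]_n) (C : set 'rV[R]_n) : \bar R :=
  ereal_inf [set (`|x - y|)%:E | y in C].

Definition dir_deriv (n k : nat) (g : 'rV[R]_n -> 'rV[R]_k) (x d : 'rV[R]_n)
    (v : 'rV[R]_k) : Prop :=
  (fun t : R => t^-1 *: (g (x + t *: d) - g x)) @ 0^'+ --> v.

Definition dir_deriv2 (n k : nat) (g : 'rV[R]_n -> 'rV[R]_k) (x d w : 'rV[R]_n)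
    (v z : 'rV[R]_k) : Prop :=
  (fun t : R => (2^-1 * t ^+ 2)^-1 *:
     (g (x + t *: d + (2^-1 * t ^+ 2) *: w) - g x - t *: v)) @ 0^'+ --> z.

Definition loc_lipschitz_at (n k : nat) (g : 'rV[R]_n -> 'rV[R]_k) (x : 'rV[R]_n)
  : Prop :=
  exists e : R, 0 < e /\ exists L : R,
    forall y z, ball x e y -> ball x e z -> `|g y - g z| <= L * `|y - z|.

Definition so_gph_regular (n k : nat) (g : 'rV[R]_n -> 'rV[R]_k) (x : 'rV[R]_n)
  : Prop :=
  loc_lipschitz_at g x /\
  exists (g1 : 'rV[R]_n -> 'rV[R]_k) (g2 : 'rV[R]_n -> 'rV[R]_n -> 'rV[R]_k),
    (forall d, dir_deriv g x d (g1 d)) /\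
    (forall d w, dir_deriv2 g x d w (g1 d) (g2 d w)) /\
    (forall (d : 'rV[R]_n) (w : R -> 'rV[R]_n),
       (fun t : R => t *: w t) @ 0^'+ --> (0 : 'rV[R]_n) ->
       exists r : R -> 'rV[R]_k,
         (fun t : R => (t ^+ 2)^-1 *: r t) @ 0^'+ --> (0 : 'rV[R]_k) /\
         forall t : R, 0 <= t ->
           g (x + t *: d + (2^-1 * t ^+ 2) *: w t)
           = g x + t *: g1 d + (2^-1 * t ^+ 2) *: g2 d (w t) + r t).

(* t_k decreasing to 0 in the sense t_k > 0, t_k -> 0 *)
Definition pos_null_seq (t : nat -> R) : Prop :=
  (forall k, 0 < t k) /\ t @ \oo --> (0 : R).

Definition tangent_cone (n : nat) (C : set 'rV[R]_n) (x : 'rV[R]_n)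
  : set 'rV[R]_n :=
  [set d | exists (t : nat -> R) (dk : nat -> 'rV[R]_n),
     pos_null_seq t /\ dk @ \oo --> d /\ forall k, C (x + t k *: dk k)].

Definition so_tangent_set (n : nat) (C : set 'rV[R]_n) (x d : 'rV[R]_n)
  : set 'rV[R]_n :=
  [set w | exists (t : nat -> R) (wk : nat -> 'rV[R]_n),
     pos_null_seq t /\ wk @ \oo --> w /\
     forall k, C (x + t k *: d + (2^-1 * t k ^+ 2) *: wk k)].

Definition outer_so_regular (n : nat) (C : set 'rV[R]_n) (x d : 'rV[R]_n)
  : Prop :=
  forall (t : nat -> R) (wk : nat -> 'rV[R]_n),
    pos_null_seq t ->
    (fun k => t k *: wk k) @ \oo --> (0 : 'rV[R]_n) ->
    (forall k, C (x + t k *: d + (2^-1 * t k ^+ 2) *: wk k)) ->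
    (fun k => dist (wk k) (so_tangent_set C x d)) @ \oo --> 0%E.

Definition MSCQ (n m : nat) (G : 'rV[R]_n -> 'rV[R]_m) (K : set 'rV[R]_m)
    (x : 'rV[R]_n) : Prop :=
  exists e : R, 0 < e /\ exists kappa : R, 0 < kappa /\
    forall y, ball x e y ->
      (dist y (G @^-1` K) <= kappa%:E * dist (G y) K)%E.

End Defs.

(* Main.v *)
Require Import Defs.
From HB Require Import structures.
From mathcomp Require Import all_boot all_order all_algebra.
From mathcomp Require Import all_classical all_reals all_analysis.
From mathcomp Require Import ring lra.
Import Order.TTheory GRing.Theory Num.Theory.
Import numFieldNormedType.Exports.
Local Open Scope classical_set_scope.
Local Open Scope ring_scope.

Section Prelim.
Variable R : realType.

Lemma seq_at_right (s : nat -> R) : pos_null_seq s -> s @ \oo --> 0^'+.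
Proof.
move=> [sp s0] B HB.
have H1 : \forall k \near \oo, 0 < s k -> B (s k) by exact: s0 _ HB.
change (\forall k \near \oo, B (s k)).
by move: H1; apply: filterS => k H; exact: H (sp k).
Qed.

Lemma sub_cvg {T : topologicalType} (f : nat -> T) (phi : nat -> nat) (a : T) :
  (forall j, (j <= phi j)%N) -> f @ \oo --> a -> (f \o phi) @ \oo --> a.
Proof.
move=> hphi fa B /fa [N _ HN]; exists N => // j /= Hj; apply: HN => /=.
exact: leq_trans Hj (hphi j).
Qed.

Lemma ecvg0 (f : nat -> \bar R) : (forall k, 0 <= f k)%E ->
  (forall e : R, 0 < e -> \forall k \near \oo, (f k <= e%:E)%E) ->
  f @ \oo --> 0%E.
Proof.
move=> f0 fe; apply/fine_cvgP; split.
  have := fe 1 ltr01; apply: filterS => k fk.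
  rewrite ge0_fin_numE //; exact: le_lt_trans fk (ltry _).
apply/cvgrPdist_le => e e0; have := fe e e0; apply: filterS => k fk.
rewrite sub0r normrN /=.
move: fk (f0 k); case: (f k) => [r||] //=; rewrite ?lee_fin => fk r0.
by rewrite ger0_norm.
Qed.

Lemma ecvg0_lt (f : nat -> \bar R) (e : R) : 0 < e -> f @ \oo --> 0%E ->
  \forall k \near \oo, (f k < e%:E)%E.
Proof.
move=> e0 /fine_cvgP [ffin fc].
have hc := (cvgrPdist_lt _ _).1 fc e e0.
near=> k.
have fk : f k \is a fin_num by near: k.
have hk : `|0 - fine (f k)| < e by near: k; exact: hc.
rewrite -(fineK fk) lte_fin; move: hk; rewrite sub0r normrN.
exact: le_lt_trans (ler_norm _).
Unshelve. all: end_near.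
Qed.

End Prelim.
Arguments seq_at_right {R s}.
Arguments ecvg0 {R f}.
Arguments ecvg0_lt {R f e}.
Lemma vid (R : realType) (V : lmodType R) (t : R) (X Y Z g : V) : t != 0 ->
  (2 * t^-1) *: (X - Z - t *: g) = 2 *: (t^-1 *: (X - Y)) + 2 *: (t^-1 *: (Y - Z) - g).
Proof.
move=> t0; rewrite -!scalerA -scalerDr; congr (2 *: _).
rewrite !scalerBr scalerA mulVf // scale1r.
by rewrite !addrA subrK.
Qed.

Lemma vid2 (V : zmodType) (a b c : V) : a + b + c - a - b = c.
Proof. by rewrite -addrA -opprD [a + b + c]addrC addrK. Qed.

Section Main.
Local Notation hf x := (2^-1 * x ^+ 2).
Variables (R : realType) (n m : nat) (K : set 'rV[R]_m) (G : 'rV[R]_n -> 'rV[R]_m) (xs : 'rV[R]_n).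
Variables (g1 : 'rV[R]_n -> 'rV[R]_m) (g2 : 'rV[R]_n -> 'rV[R]_n -> 'rV[R]_m).
Hypothesis hd1 : forall d, dir_deriv G xs d (g1 d).
Hypothesis hd2 : forall d w, dir_deriv2 G xs d w (g1 d) (g2 d w).
Variables (eM kappa : R).
Hypotheses (heM : 0 < eM) (hkappa : 0 < kappa).
Hypothesis hM : forall y, ball xs eM y ->
  (dist y (G @^-1` K) <= kappa%:E * dist (G y) K)%E.

Lemma h_gt0 [t : R] : 0 < t -> 0 < 2^-1 * t ^+ 2.
Proof. by move=> t0; rewrite mulr_gt0 ?invr_gt0 ?exprn_gt0. Qed.

Lemma KL d w z e : 0 < e ->
  (dist z (so_tangent_set K (G xs) (g1 d)) < e%:E)%E ->
  (dist w (so_tangent_set (G @^-1` K) xs d) <= (kappa * (`|g2 d w - z| + e))%:E)%E.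
Proof.
move=> e0 /ereal_inf_lt [_ [zeta [s [zs [hs [zsc zsK]]]] <-]].
rewrite lte_fin => hzz.
set c := `|g2 d w - z| + e.
have c0 : 0 < c by have := normr_ge0 (g2 d w - z); rewrite /c; lra.
have hgz : `|g2 d w - zeta| < c.
  have := ler_distD z (g2 d w) zeta; rewrite /c; lra.
have hs' := seq_at_right hs.
set p := fun j => xs + s j *: d + (2^-1 * s j ^+ 2) *: w.
set rho := fun j => (2^-1 * s j ^+ 2)^-1 *: (G (p j) - G xs - s j *: g1 d).
have rhoc : rho @ \oo --> g2 d w by exact: (cvg_comp _ _ hs' (hd2 d w)).
have pc : p @ \oo --> xs.
  have -> : xs = xs + 0 *: d + (2^-1 * 0 ^+ 2) *: w.
    by rewrite scale0r expr2 mul0r mulr0 scale0r !addr0.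
  apply: cvgD; first apply: cvgD; first exact: cvg_cst.
    by apply: cvgZ; [exact: hs.2 | exact: cvg_cst].
  apply: cvgZ; last exact: cvg_cst.
  apply: cvgM; first exact: cvg_cst.
  rewrite expr2; apply: (cvgM hs.2 hs.2).
have ev : \forall j \near \oo, ball xs eM (p j) /\ `|rho j - zs j| < c.
  pose del := (c - `|g2 d w - zeta|) / 2.
  have del0 : 0 < del by rewrite /del; lra.
  have h1 := (cvgrPdist_lt _ _).1 rhoc del del0.
  have h2 := (cvgrPdist_lt _ _).1 zsc del del0.
  have h3 : \forall j \near \oo, ball xs eM (p j) by exact: pc _ (nbhsx_ballx xs eM heM).
  near=> j; split; first by near: j; exact: h3.
  have a1 : `|g2 d w - rho j| < del by near: j; exact: h1.
  have a2 : `|zeta - zs j| < del by near: j; exact: h2.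
  have b1 := ler_distD (g2 d w) (rho j) (zs j).
  have b2 := ler_distD zeta (g2 d w) (zs j).
  rewrite distrC in a1; rewrite /del in a1 a2; lra.
case: ev => N _ HN.
have hq : forall j, exists q, (G @^-1` K) q /\
    `|p (j + N)%N - q| < kappa * (2^-1 * s (j + N)%N ^+ 2 * c).
  move=> j; set J := (j + N)%N.
  have [hb hr] := HN J (leq_addl _ _).
  have hJ := h_gt0 (hs.1 J).
  set hh := 2^-1 * s J ^+ 2 in hJ *.
  have eqG : G (p J) - (G xs + s J *: g1 d + hh *: zs J) = hh *: (rho J - zs J).
    rewrite /rho scalerBr scalerA mulfV ?gt_eqF // scale1r.
    by rewrite !opprD !addrA.
  have dK : (dist (G (p J)) K <= (hh * `|rho J - zs J|)%:E)%E.
    apply: ereal_inf_lbound; exists (G xs + s J *: g1 d + hh *: zs J) => //.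
    by rewrite eqG normrZ ger0_norm ?ltW.
  have dP : (dist (p J) (G @^-1` K) < (kappa * (hh * c))%:E)%E.
    apply: (le_lt_trans (hM _ hb)).
    apply: (le_lt_trans (lee_wpmul2l _ dK)); first by rewrite lee_fin ltW.
    by rewrite -EFinM lte_fin ltr_pM2l // ltr_pM2l.
  have [_ [q hq <-]] := ereal_inf_lt dP.
  by exists q; split => //; rewrite -lte_fin.
have [qf hqf] := choice hq.
pose u := fun j => w + (2^-1 * s (j + N)%N ^+ 2)^-1 *: (qf j - p (j + N)%N).
have hu1 : forall j, xs + s (j + N)%N *: d + (2^-1 * s (j + N)%N ^+ 2) *: u j = qf j.
  move=> j; rewrite /u scalerDr scalerA mulfV ?gt_eqF ?h_gt0 ?hs.1 // scale1r /p.
  by rewrite addrA addrC subrK.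
have kc0 : 0 < kappa * c by rewrite mulr_gt0.
have hu2 : forall j, `|w - u j| <= kappa * c.
  move=> j; rewrite /u opprD addrA subrr sub0r normrN normrZ.
  have hJ := h_gt0 (hs.1 (j + N)%N).
  rewrite ger0_norm; last by rewrite invr_ge0 ltW.
  have := (hqf j).2; rewrite distrC => H.
  rewrite mulrC ler_pdivrMr //.
  apply/ltW; apply: (lt_le_trans H).
  have -> : kappa * c * (2^-1 * s (j + N)%N ^+ 2) = kappa * (2^-1 * s (j + N)%N ^+ 2 * c) by ring.
  by [].
pose A := closed_ball w (kappa * c).
have Ab : bounded_set A.
  have hb := nbhs_pinfty_ge (num_real (`|w| + kappa * c)).
  rewrite /A closed_ballE // /bounded_near /=; near=> M => x /= hx.
  have hM' : `|w| + kappa * c <= M by near: M; exact: hb.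
  move: hx; rewrite /closed_ball_ /= => hx.
  have := ler_distD w 0 x; rewrite !sub0r !normrN; lra.
have Ac : closed A by exact: closed_ball_closed.
have FA : (u @ \oo) A.
  by exists 0%N => // j _ /=; rewrite /A closed_ballE //; exact: hu2 j.
have [ut [Aut clut]] := bounded_closed_compact Ab Ac _ FA.
have hphi : forall k, exists j, (k <= j)%N /\ `|ut - u j| < k.+1%:R^-1.
  move=> k.
  have F1 : (u @ \oo) (u @` [set j | (k <= j)%N]).
    by exists k => // j /= hj; exists j.
  have F2 : nbhs ut (ball ut k.+1%:R^-1) by apply: nbhsx_ballx; rewrite invr_gt0.
  have [_ [[j hj <-] hb]] := clut _ _ F1 F2.
  by exists j; split => //; move: hb; rewrite -ball_normE.
have [phi hphi'] := choice hphi.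
have utT : so_tangent_set (G @^-1` K) xs d ut.
  exists (fun k => s (phi k + N)%N), (fun k => u (phi k)); split; [split|split].
  - by move=> k; exact: hs.1.
  - apply: (@sub_cvg _ s (fun k => (phi k + N)%N) 0 _ hs.2).
    by move=> j; exact: leq_trans (hphi' j).1 (leq_addr _ _).
  - apply/cvgrPdist_lt => eps eps0.
    have hn := near_infty_natSinv_lt (PosNum eps0).
    near=> k; have := (hphi' k).2 => H; apply: (lt_trans H).
    by near: k; exact: hn.
  - by move=> k /=; rewrite hu1; exact: (hqf (phi k)).1.
apply: (@le_trans _ _ (`|w - ut|%:E)); first by apply: ereal_inf_lbound; exists ut.
by move: Aut; rewrite /A closed_ballE.
Unshelve. all: end_near.
Qed.

Variables (e0 L : R).
Hypothesis he0 : 0 < e0.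
Hypothesis hL : forall y z, ball xs e0 y -> ball xs e0 z -> `|G y - G z| <= L * `|y - z|.
Hypothesis hgph : forall (d : 'rV[R]_n) (w : R -> 'rV[R]_n),
       (fun t : R => t *: w t) @ 0^'+ --> (0 : 'rV[R]_n) ->
       exists r : R -> 'rV[R]_m,
         (fun t : R => (t ^+ 2)^-1 *: r t) @ 0^'+ --> (0 : 'rV[R]_m) /\
         forall t : R, 0 <= t ->
           G (xs + t *: d + (2^-1 * t ^+ 2) *: w t)
           = G xs + t *: g1 d + (2^-1 * t ^+ 2) *: g2 d (w t) + r t.

Lemma main_dec d (t : nat -> R) (wk : nat -> 'rV[R]_n) :
  outer_so_regular K (G xs) (g1 d) ->
  pos_null_seq t -> (forall k, t k.+1 < t k) ->
  (fun k => t k *: wk k) @ \oo --> (0 : 'rV[R]_n) ->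
  (forall k, (G @^-1` K) (xs + t k *: d + (2^-1 * t k ^+ 2) *: wk k)) ->
  (fun k => dist (wk k) (so_tangent_set (G @^-1` K) xs d)) @ \oo --> 0%E.
Proof.
move=> hK ht hdec twc hmem.
have mono : forall i j, (i <= j)%N -> t j <= t i.
  move=> i j /subnK <-; elim: (j - i)%N => [|k IH]; first by rewrite add0n.
  by rewrite addSn; exact: le_trans (ltW (hdec _)) IH.
have inj : forall i j, t i = t j -> i = j.
  move=> i j e; case: (ltngtP i j) => // hij.
    have H1 := mono _ _ hij; have H2 := hdec i; rewrite e in H2; by move: (lt_le_trans H2 H1); rewrite ltxx.
  have H1 := mono _ _ hij; have H2 := hdec j; rewrite -e in H2; by move: (lt_le_trans H2 H1); rewrite ltxx.
pose wp : R -> 'rV[R]_n := fun tau =>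
  if pselect (exists k, t k = tau) is left h then wk (projT1 (cid h)) else 0.
have wpE : forall k, wp (t k) = wk k.
  move=> k; rewrite /wp; case: pselect => [h|]; last by case; exists k.
  by case: (cid h) => k' /= /inj ->.
have wpc : (fun tau => tau *: wp tau) @ 0^'+ --> (0 : 'rV[R]_n).
  apply/cvgr0Pnorm_lt => eps eps0.
  have [N _ HN] := (cvgr0Pnorm_lt _).1 twc eps eps0.
  have := nbhs_right_lt (ht.1 N); apply: filterS => tau htau.
  rewrite /wp; case: pselect => [h|_]; last by rewrite scaler0 normr0.
  case: (cid h) => k /= hk; rewrite -hk; apply: HN => /=.
  rewrite -hk in htau; rewrite leqNgt; apply/negP => /ltnW /mono H1; by move: (lt_le_trans htau H1); rewrite ltxx.
have [r [rc rE]] := hgph d wp wpc.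
have hh0 : forall k, 0 < hf (t k) := fun k => h_gt0 (ht.1 k).
pose z := fun k => g2 d (wk k) + (hf (t k))^-1 *: r (t k).
have Gx : forall k, G (xs + t k *: d + hf (t k) *: wk k) = G xs + t k *: g1 d + hf (t k) *: z k.
  move=> k; have := rE (t k) (ltW (ht.1 k)); rewrite wpE => ->.
  by rewrite /z scalerDr scalerA mulfV ?gt_eqF // scale1r addrA.
have rseq : (fun k => (t k ^+ 2)^-1 *: r (t k)) @ \oo --> (0 : 'rV[R]_m).
  exact: (cvg_comp _ _ (seq_at_right ht) rc).
have zdiff : (fun k => (hf (t k))^-1 *: r (t k)) @ \oo --> (0 : 'rV[R]_m).
  have -> : (fun k => (hf (t k))^-1 *: r (t k)) = (fun k => 2 *: ((t k ^+ 2)^-1 *: r (t k))).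
    by apply/funext => k; rewrite scalerA invfM invrK.
  have H := cvgZ (cvg_cst (2:R)) rseq; rewrite scaler0 in H; exact: H.
have tz : (fun k => t k *: z k) @ \oo --> (0 : 'rV[R]_m).
  pose D := fun k => (t k)^-1 *: (G (xs + t k *: d) - G xs).
  have Dc : D @ \oo --> g1 d by exact: (cvg_comp _ _ (seq_at_right ht) (hd1 d)).
  pose L1 := `|L| + 1.
  have L10 : 0 < L1 by rewrite /L1 (le_lt_trans (normr_ge0 L)) // ltrDl.
  have LL1 : L <= L1 by rewrite /L1 (le_trans (ler_norm L)) // lerDl.
  have xc : (fun k => xs + t k *: d + hf (t k) *: wk k) @ \oo --> xs.
    have -> : (fun k => xs + t k *: d + hf (t k) *: wk k) =
        (fun k => xs + t k *: d + (2^-1 * t k) *: (t k *: wk k)).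
      by apply/funext => k; rewrite scalerA expr2 mulrA.
    have H : (fun k => xs + t k *: d + (2^-1 * t k) *: (t k *: wk k)) @ \oo -->
        xs + 0 *: d + (2^-1 * 0) *: (0 : 'rV[R]_n).
      apply: cvgD; first apply: cvgD; first exact: cvg_cst.
        by apply: cvgZ; [exact: ht.2 | exact: cvg_cst].
      apply: cvgZ; last exact: twc.
      by apply: cvgM; [exact: cvg_cst | exact: ht.2].
    by rewrite scale0r scaler0 !addr0 in H.
  have yc : (fun k => xs + t k *: d) @ \oo --> xs.
    have H : (fun k => xs + t k *: d) @ \oo --> xs + 0 *: d.
      apply: cvgD; first exact: cvg_cst.
      by apply: cvgZ; [exact: ht.2 | exact: cvg_cst].
    by rewrite scale0r addr0 in H.
  apply/cvgr0Pnorm_lt => eps eps0.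
  have e1 : 0 < eps / 4 by rewrite divr_gt0.
  have e2 : 0 < eps / (2 * L1) by rewrite divr_gt0 // mulr_gt0.
  have A1 := (cvgrPdist_lt _ _).1 Dc _ e1.
  have A2 := (cvgr0Pnorm_lt _).1 twc _ e2.
  have A3 := xc _ (nbhsx_ballx xs e0 he0).
  have A4 := yc _ (nbhsx_ballx xs e0 he0).
  near=> k.
  have a1 : `|g1 d - D k| < eps / 4 by near: k; exact: A1.
  have a2 : `|t k *: wk k| < eps / (2 * L1) by near: k; exact: A2.
  have a3 : ball xs e0 (xs + t k *: d + hf (t k) *: wk k) by near: k; exact: A3.
  have a4 : ball xs e0 (xs + t k *: d) by near: k; exact: A4.
  have tk0 := ht.1 k.
  have lip := hL _ _ a3 a4.
  have E : forall a b : 'rV[R]_n, a + b - a = b by move=> a b; rewrite addrC addKr.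
  rewrite E in lip.
  set X := G (xs + t k *: d + hf (t k) *: wk k) in lip *.
  set Y := G (xs + t k *: d) in lip *.
  have zE : t k *: z k = 2 *: ((t k)^-1 *: (X - Y)) + 2 *: (D k - g1 d).
    have -> : z k = (hf (t k))^-1 *: (X - G xs - t k *: g1 d).
      by rewrite /X Gx vid2 scalerA mulVf ?gt_eqF // scale1r.
    rewrite [in LHS]scalerA.
    have -> : t k * (hf (t k))^-1 = 2 * (t k)^-1 by field; rewrite gt_eqF.
    rewrite /D -!scalerA -scalerDr; congr (2 *: _).
    rewrite !scalerBr scalerA mulVf ?gt_eqF // scale1r.
    by rewrite !addrA subrK.
  rewrite zE.
  have hwk : `|hf (t k) *: wk k| = t k / 2 * `|t k *: wk k|.
    rewrite !normrZ !ger0_norm ?ltW //; ring.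
  rewrite hwk in lip.
  have lip2 : `|X - Y| <= L1 * (t k / 2 * `|t k *: wk k|).
    apply: (le_trans lip); apply: ler_wpM2r => //.
    by rewrite mulr_ge0 // divr_ge0 // ltW.
  have lip3 : (t k)^-1 * `|X - Y| <= L1 * `|t k *: wk k| / 2.
    have -> : L1 * `|t k *: wk k| / 2 = (t k)^-1 * (L1 * (t k / 2 * `|t k *: wk k|)).
      by field; rewrite gt_eqF.
    by apply: ler_wpM2l => //; rewrite invr_ge0 ltW.
  have a2' : L1 * `|t k *: wk k| < eps / 2.
    have <- : L1 * (eps / (2 * L1)) = eps / 2 by field; rewrite gt_eqF.
    by rewrite ltr_pM2l.
  have n1 := ler_normD (2 *: ((t k)^-1 *: (X - Y))) (2 *: (D k - g1 d)).
  have ti : 0 <= (t k)^-1 by rewrite invr_ge0 ltW.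
  rewrite !normrZ (ger0_norm (ler0n _ 2)) (ger0_norm ti) in n1.
  rewrite distrC in a1.
  have := normr_ge0 (t k *: wk k).
  move: n1 a1 a2' lip3; lra.
have dz := hK t z ht tz.
have dz' : (fun k => dist (z k) (so_tangent_set K (G xs) (g1 d))) @ \oo --> 0%E.
  by apply: dz => k; rewrite -Gx; exact: hmem k.
apply: ecvg0.
  by move=> k; apply: le_ereal_inf_tmp => _ [y _ <-]; rewrite lee_fin.
move=> eps eps0.
pose e := eps / (2 * kappa).
have e0' : 0 < e by rewrite divr_gt0 // mulr_gt0.
have B1 := ecvg0_lt e0' dz'.
have B2 := (cvgr0Pnorm_lt _).1 zdiff e e0'.
near=> k.
have b1 : (dist (z k) (so_tangent_set K (G xs) (g1 d)) < e%:E)%E by near: k; exact: B1.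
have b2 : `|(hf (t k))^-1 *: r (t k)| < e by near: k; exact: B2.
apply: (le_trans (KL _ _ _ _ e0' b1)); rewrite lee_fin.
have -> : g2 d (wk k) - z k = - ((hf (t k))^-1 *: r (t k)).
  by rewrite /z opprD addrA subrr add0r.
rewrite normrN.
have -> : eps = kappa * (2 * e) by rewrite /e; field; rewrite gt_eqF.
apply: ler_wpM2l; first exact: ltW.
move: b2; lra.
Unshelve. all: end_near.
Qed.

Lemma main_gen d : outer_so_regular K (G xs) (g1 d) ->
  outer_so_regular (G @^-1` K) xs d.
Proof.
move=> hK t wk ht twc hmem.
pose f := fun k => dist (wk k) (so_tangent_set (G @^-1` K) xs d).
apply: ecvg0.
  by move=> k; apply: le_ereal_inf_tmp => _ [y _ <-]; rewrite lee_fin.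
move=> eps eps0; apply: contrapT => hne.
have hinf : forall N, exists k, (N <= k)%N /\ (eps%:E < f k)%E.
  move=> N; apply: contrapT => hN; apply: hne; exists N => // k /= hk.
  rewrite leNgt; apply/negP => hlt; apply: hN; exists k; split => //.
have hnext : forall i, exists k, (i < k)%N /\ t k < t i /\ (eps%:E < f k)%E.
  move=> i; have [M _ HM] := (cvgrPdist_lt _ _).1 ht.2 (t i) (ht.1 i).
  have [k [hk1 hk2]] := hinf (maxn M i.+1).
  exists k; split; first by move: hk1; rewrite geq_max => /andP[].
  split => //.
  have := HM k; rewrite /= sub0r normrN ger0_norm ?ltW ?ht.1 //; apply.
  by move: hk1; rewrite geq_max => /andP[].
have [nx hnx] := choice hnext.
have [k0 hk0] := hinf 0%N.
pose phi := fun j => iter j nx k0.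
have phiS : forall j, phi j.+1 = nx (phi j) by [].
have phi_ge : forall j, (j <= phi j)%N.
  elim => // j IH; exact: (leq_ltn_trans IH (hnx (phi j)).1).
have fphi : forall j, (eps%:E < f (phi j))%E.
  case => [|j]; [exact: hk0.2 | exact: (hnx (phi j)).2.2].
have H := @main_dec d (t \o phi) (wk \o phi) hK.
have H1 : pos_null_seq (t \o phi).
  by split; [move=> j; exact: ht.1 | exact: sub_cvg phi_ge ht.2].
have H2 : forall j, (t \o phi) j.+1 < (t \o phi) j.
  by move=> j; exact: (hnx (phi j)).2.1.
have H3 : (fun k => (t \o phi) k *: (wk \o phi) k) @ \oo --> (0 : 'rV[R]_n).
  exact: (@sub_cvg _ (fun k => t k *: wk k) phi 0 phi_ge twc).
have H4 := H H1 H2 H3 (fun j => hmem (phi j)).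
have [N _ HN] := ecvg0_lt eps0 H4.
have := HN N (leqnn N); have := fphi N; rewrite /f /= => a b.
by have := lt_trans a b; rewrite ltxx.
Qed.

End Main.

Theorem proposition3p3 (R : realType) (n m : nat)
    (K : set 'rV[R]_m) (G : 'rV[R]_n -> 'rV[R]_m) (xs : 'rV[R]_n) :
  closed K ->
  so_gph_regular G xs ->
  (G @^-1` K) xs ->
  MSCQ G K xs ->
  (forall d v : _, dir_deriv G xs d v ->
     outer_so_regular K (G xs) v -> outer_so_regular (G @^-1` K) xs d) /\
  ((forall v, outer_so_regular K (G xs) v) ->
     forall d, outer_so_regular (G @^-1` K) xs d).
Proof.
move=> Kc [[e0 [he0 [L hL]]] [g1 [g2 [hd1 [hd2 hgph]]]]] hxs [eM [heM [kappa [hkappa hM]]]].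
have key := @main_gen R n m K G xs g1 g2 hd1 hd2 eM kappa heM hkappa hM e0 L he0 hL hgph.
split.
  move=> d v hv hKv; apply: key.
  have -> : g1 d = v by exact: (cvg_unique _ (hd1 d) hv).
  exact: hKv.
by move=> hall d; exact: key (hall (g1 d)).
Qed.
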